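(* Fix $\theta\in(1/2,7/8]$, $h_1\in[0,1]$, $\alpha\in[0,1]$ and $[\underline h,\bar h]\subset(0,1)$. Assume the $J_X$ are independent with finite second moments and $\sum_X\mathrm{Var}(J_X)\le Cn$ for a constant $C$ independent of $n$, and let $C_P>0$ be a constant independent of $n,h_0,h_1,\alpha$ with $\mathbb E[(P_n(h_0,h_1,\alpha)-p_n(h_0,h_1,\alpha))^2]\le C_P/n$ for all parameters. Then for all sufficiently large $n$, $$\int_{\underline h}^{\bar h}dh_0\,\mathbb E\big[(\langle Q_1\rangle_{h_0,h_1,\alpha}-\mathbb E\langle Q_1\rangle_{h_0,h_1,\alpha})^2\big]\le\frac{5C_P+40}{n^{1/3}}.$$
   Context: Spins $\boldsymbol\sigma\in\{-1,1\}^n$, $\sigma_X=\prod_{i\in X}\sigma_i$. The couplings $J_X\ge0$, $X\subset\{1,\dots,n\}$, are independent random variables; $\tau_1,\dots,\tau_n$ are i.i.d. Poisson with mean $\alpha n^{\theta-1}$, independent of the couplings. Hamiltonian $\mathcal H(\boldsymbol\sigma)=-\sum_XJ_X\sigma_X-h_0\sum_i\sigma_i-h_1\sum_i\tau_i\sigma_i$, partition function $\mathcal Z_{h_0,h_1,\alpha}$, Gibbs expectation $\langle\cdot\rangle_{h_0,h_1,\alpha}$. $Q_1=\frac1n\sum_i\sigma_i$. Pressure $P_n=\frac1n\ln\mathcal Z_{h_0,h_1,\alpha}$, $p_n=\mathbb EP_n$ with $\mathbb E$ over all $J_X$ and $\boldsymbol\tau$. *)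

(* Defs.v *)
From HB Require Import structures.
From mathcomp Require Import all_boot all_order all_algebra.
From mathcomp Require Import all_classical all_reals all_analysis.
From mathcomp Require Import probability.
Set Implicit Arguments. Unset Strict Implicit. Unset Printing Implicit Defensive.
Import Order.TTheory GRing.Theory Num.Theory.
Local Open Scope classical_set_scope.
Local Open Scope ring_scope.

Section model.
Variable R : realType.

Definition spin (b : bool) : R := if b then 1 else -1.

Definition sigmaX n (s : {ffun 'I_n -> bool}) (X : {set 'I_n}) : R :=
  \prod_(i in X) spin (s i).

Definition hamiltonian n (J : {set 'I_n} -> R) (tau : 'I_n -> R) (h0 h1 : R)
    (s : {ffun 'I_n -> bool}) : R :=
  - (\sum_(X : {set 'I_n}) J X * sigmaX s X)
  - h0 * (\sum_(i < n) spin (s i))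
  - h1 * (\sum_(i < n) tau i * spin (s i)).

Definition Zpart n (J : {set 'I_n} -> R) (tau : 'I_n -> R) (h0 h1 : R) : R :=
  \sum_(s : {ffun 'I_n -> bool}) expR (- hamiltonian J tau h0 h1 s).

Definition pressure n (J : {set 'I_n} -> R) (tau : 'I_n -> R) (h0 h1 : R) : R :=
  ln (Zpart J tau h0 h1) / n%:R.

Definition Q1 n (s : {ffun 'I_n -> bool}) : R := (\sum_(i < n) spin (s i)) / n%:R.

Definition gibbs_Q1 n (J : {set 'I_n} -> R) (tau : 'I_n -> R) (h0 h1 : R) : R :=
  (\sum_(s : {ffun 'I_n -> bool}) Q1 s * expR (- hamiltonian J tau h0 h1 s))
  / Zpart J tau h0 h1.

End model.

Definition mutually_independent d (T : measurableType d) (R : realType)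
    (P : probability T R) (I : finType) (X : I -> T -> R) : Prop :=
  forall (S : {set I}) (B : I -> set R), (forall i, measurable (B i)) ->
    P (\bigcap_(i in [set i | i \in S]) (X i @^-1` B i)) =
    (\prod_(i in S) P (X i @^-1` B i))%E.

Definition coupling_family d (T : measurableType d) (R : realType) n
    (J : {set 'I_n} -> T -> R) (tau : 'I_n -> T -> nat) :
    ({set 'I_n} + 'I_n)%type -> T -> R :=
  fun k => match k with
           | inl X => J X
           | inr i => fun w => (tau i w)%:R
           end.

Definition poisson_mean (R : realType) (alpha theta : R) (n : nat) : R :=
  alpha * (n%:R `^ (theta - 1)).

(* Main.v *)
Require Import Defs.
From HB Require Import structures.
From mathcomp Require Import all_boot all_order all_algebra.
From mathcomp Require Import all_classical all_reals all_analysis.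
From mathcomp Require Import probability measurable_realfun.
From mathcomp Require Import ring lra.
Import Order.TTheory GRing.Theory Num.Theory.
Import numFieldNormedType.Exports.
Set Implicit Arguments. Unset Strict Implicit. Unset Printing Implicit Defensive.
Local Open Scope classical_set_scope.
Local Open Scope ring_scope.
Section det.
Variables (R : realType) (n : nat) (J : {set 'I_n} -> R) (tau : 'I_n -> R) (h1 : R).

Definition Ssum (s : {ffun 'I_n -> bool}) : R := \sum_(i < n) spin R (s i).

Lemma spin_norm b : `|spin R b| = 1.
Proof. by case: b; rewrite /spin ?normrN normr1. Qed.

Lemma Ssum_norm s : `|Ssum s| <= n%:R.
Proof.
rewrite /Ssum; apply: (le_trans (ler_norm_sum _ _ _)).
under eq_bigr do rewrite spin_norm.
by rewrite sumr_const card_ord.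
Qed.

Lemma H_shift h d s : - hamiltonian J tau (h + d) h1 s =
  - hamiltonian J tau h h1 s + d * Ssum s.
Proof. rewrite /hamiltonian /Ssum; ring. Qed.

Lemma weight_gt0 h s : 0 < expR (- hamiltonian J tau h h1 s).
Proof. exact: expR_gt0. Qed.

Lemma Zpart_gt0 h : 0 < Zpart J tau h h1.
Proof.
rewrite /Zpart (bigD1 [ffun=> true]) //=.
apply: ltr_wpDr; last exact: weight_gt0.
by apply: sumr_ge0 => s _; exact: expR_ge0.
Qed.

Lemma Zpart_shift h d : Zpart J tau (h + d) h1 =
  \sum_s expR (- hamiltonian J tau h h1 s) * expR (d * Ssum s).
Proof. by apply: eq_bigr => s _; rewrite H_shift expRD. Qed.

Lemma gibbs_Q1_norm h : `|gibbs_Q1 J tau h h1| <= 1.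
Proof.
rewrite /gibbs_Q1 normrM normfV (gtr0_norm (Zpart_gt0 h)).
rewrite ler_pdivrMr ?Zpart_gt0 // mul1r.
apply: (le_trans (ler_norm_sum _ _ _)); rewrite /Zpart; apply: ler_sum => s _.
rewrite normrM (gtr0_norm (weight_gt0 h s)); apply: ler_piMl; first exact: expR_ge0.
rewrite /Q1 normrM normfV normr_nat.
have [n0|n0] := eqVneq n 0%N.
  have -> : (n%:R : R)^-1 = 0 by rewrite n0 invr0.
  by rewrite mulr0.
rewrite ler_pdivrMr ?ltr0n ?lt0n // mul1r; exact: Ssum_norm.
Qed.
Hypothesis n0 : (0 < n)%N.

Lemma pressure_tangent h d :
  d * gibbs_Q1 J tau h h1 <= pressure J tau (h + d) h1 - pressure J tau h h1.
Proof.
set Z := Zpart J tau h h1.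
have Z0 : 0 < Z := Zpart_gt0 h.
have nR0 : (n%:R : R) != 0 by rewrite pnatr_eq0 -lt0n.
set mu := d * n%:R * gibbs_Q1 J tau h h1.
have key : \sum_s expR (- hamiltonian J tau h h1 s) * (d * Ssum s) = mu * Z.
  rewrite /mu /gibbs_Q1 -/Z -!mulrA mulVf ?gt_eqF // mulr1 mulr_sumr mulr_sumr.
  apply: eq_bigr => s _; rewrite /Q1 -/(Ssum s); field; exact: nR0.
have hZ : expR mu * Z <= Zpart J tau (h + d) h1.
  rewrite Zpart_shift.
  apply: (@le_trans _ _ (\sum_s expR (- hamiltonian J tau h h1 s) *
      (expR mu * (1 + (d * Ssum s - mu))))).
    under eq_bigr do rewrite mulrCA.
    rewrite -mulr_sumr; apply: ler_wpM2l; first exact: expR_ge0.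
    under eq_bigr do rewrite mulrDr mulr1 mulrBr.
    rewrite big_split /= sumrB key -mulr_suml -/Z.
    by rewrite (mulrC Z mu) subrr addr0.
  apply: ler_sum => s _; apply: ler_wpM2l; first exact: expR_ge0.
  rewrite -[X in _ <= expR X](subrK mu) expRD [X in _ <= X]mulrC.
  apply: ler_wpM2l; first exact: expR_ge0.
  exact: expR_ge1Dx.
have : ln (expR mu * Z) <= ln (Zpart J tau (h + d) h1).
  by rewrite ler_ln ?posrE ?mulr_gt0 ?expR_gt0 ?Zpart_gt0.
rewrite lnM ?posrE ?expR_gt0 // expRK => hl.
rewrite /pressure -/Z -mulrBl ler_pdivlMr ?ltr0n //.
by rewrite /mu -mulrA mulrCA -mulrA mulrC in hl *; lra.
Qed.

Lemma dm_ge h d : - `|d| <= d * gibbs_Q1 J tau h h1.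
Proof.
rewrite -normrN lerNl -mulrN; apply: (le_trans (ler_norm _)).
rewrite normrM normrN; apply: ler_piMr => //; rewrite normrN; exact: gibbs_Q1_norm.
Qed.

Lemma pressure_lip a b : `|pressure J tau a h1 - pressure J tau b h1| <= `|a - b|.
Proof.
have t1 := pressure_tangent b (a - b); rewrite [b + _]addrC subrK in t1.
have t2 := pressure_tangent a (b - a); rewrite [a + _]addrC subrK in t2.
have e1 := dm_ge b (a - b); have e2 := dm_ge a (b - a).
rewrite distrC in e2.
rewrite ler_norml; apply/andP; split; lra.
Qed.

Lemma pressure_convex h d :
  0 <= pressure J tau (h + d) h1 + pressure J tau (h - d) h1 - 2 * pressure J tau h h1.
Proof.
have t1 := pressure_tangent h d; have t2 := pressure_tangent h (- d).
rewrite mulNr in t2; lra.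
Qed.

Lemma gibbs_sandwich h d : 0 < d ->
  (pressure J tau h h1 - pressure J tau (h - d) h1) / d <= gibbs_Q1 J tau h h1 <=
  (pressure J tau (h + d) h1 - pressure J tau h h1) / d.
Proof.
move=> d0; have t1 := pressure_tangent h d; have t2 := pressure_tangent h (- d).
rewrite ler_pdivrMr // ler_pdivlMr //; apply/andP; split; lra.
Qed.
End det.
Lemma mnat (R : realType) : measurable_fun [set: nat] (fun k : nat => (k%:R : R)).
Proof. by move=> _ B mB; rewrite setTI. Qed.

Lemma lfun_meas d (T : measurableType d) (R : realType) (P : probability T R) (f : T -> R) :
  f \in Lfun P 2%:E -> measurable_fun setT f.
Proof. by move/sub_Lfun_mfun; rewrite inE. Qed.

Lemma measN d (T : measurableType d) (R : realType) (f : T -> R) :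
  measurable_fun setT f -> measurable_fun setT (fun w => - f w).
Proof. by move=> mf; apply: (measurableT_comp (@measurable_realfun.oppr_measurable R setT) mf). Qed.

Ltac mtac := repeat first [ apply: measurable_realfun.measurable_funD | apply: measurable_realfun.measurable_funB
  | apply: measurable_realfun.measurable_funM | apply: measN | apply: measurable_sum => ?
  | apply: measurable_cst ].

Section meas.
Context d (T : measurableType d) (R : realType) (n : nat)
  (Jw : {set 'I_n} -> T -> R) (tw : 'I_n -> T -> R) (h1 : R).
Hypothesis mJ : forall X, measurable_fun setT (Jw X).
Hypothesis mt : forall i, measurable_fun setT (tw i).

Lemma meas_H h s : measurable_fun setT
  (fun w => - hamiltonian (fun X => Jw X w) (fun i => tw i w) h h1 s).
Proof.
rewrite /hamiltonian; mtac; first exact: mJ.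
exact: mt.
Qed.

Lemma meas_W h s : measurable_fun setT
  (fun w => expR (- hamiltonian (fun X => Jw X w) (fun i => tw i w) h h1 s)).
Proof. exact: (measurableT_comp (@measurable_realfun.measurable_expR R) (meas_H h s)). Qed.

Lemma meas_Z h : measurable_fun setT
  (fun w => Zpart (fun X => Jw X w) (fun i => tw i w) h h1).
Proof. rewrite /Zpart; apply: measurable_sum => s; exact: meas_W. Qed.

Lemma meas_P h : measurable_fun setT
  (fun w => pressure (fun X => Jw X w) (fun i => tw i w) h h1).
Proof.
rewrite /pressure; apply: measurable_realfun.measurable_funM; last exact: measurable_cst.
exact: (measurableT_comp (@measurable_realfun.measurable_ln R) (meas_Z h)).
Qed.

Lemma meas_G h : measurable_fun setT
  (fun w => gibbs_Q1 (fun X => Jw X w) (fun i => tw i w) h h1).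
Proof.
have -> : (fun w => gibbs_Q1 (fun X => Jw X w) (fun i => tw i w) h h1) =
  (fun w => (\sum_s Q1 R s * expR (- hamiltonian (fun X => Jw X w) (fun i => tw i w) h h1 s))
     * expR (- ln (Zpart (fun X => Jw X w) (fun i => tw i w) h h1))).
  apply/funext => w; rewrite /gibbs_Q1 expRN lnK //; rewrite posrE; exact: Zpart_gt0.
apply: measurable_realfun.measurable_funM.
  apply: measurable_sum => s; apply: measurable_realfun.measurable_funM; first exact: measurable_cst.
  exact: meas_W.
apply: (measurableT_comp (@measurable_realfun.measurable_expR R)); apply: measN.
exact: (measurableT_comp (@measurable_realfun.measurable_ln R) (meas_Z h)).
Qed.
End meas.
Section expect.
Context d (T : measurableType d) (R : realType) (P : probability T R).
Local Open Scope ereal_scope.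

Definition Er (f : T -> R) : R := fine 'E_P[f].

Lemma L1_meas (f : T -> R) : f \in Lfun P 1 -> measurable_fun setT f.
Proof. by move/sub_Lfun_mfun; rewrite inE. Qed.

Lemma E_fin (f : T -> R) : f \in Lfun P 1 -> 'E_P[f] = (Er f)%:E.
Proof. by move=> fL; rewrite /Er fineK // expectation_fin_num. Qed.

Lemma dom_L1 (f g : T -> R) : measurable_fun setT f -> g \in Lfun P 1 ->
  (forall w, `|f w| <= g w)%R -> f \in Lfun P 1.
Proof.
move=> mf gL fg; apply/Lfun1_integrable; apply/integrableP; split.
  exact/measurable_EFinP.
move/Lfun1_integrable/integrableP: gL => [mg gfin].
apply: le_lt_trans gfin; apply: ge0_le_integral => //.
- apply: measurableT_comp => //; exact/measurable_EFinP.
- apply: measurableT_comp => //.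
- by move=> w _ /=; rewrite !lee_fin (le_trans (fg w)) // ler_norm.
Qed.

Lemma cst_L1 (c : R) : cst c \in Lfun P 1.
Proof. exact: Lfun_cst. Qed.

Lemma bdd_L1 (f : T -> R) (M : R) : measurable_fun setT f ->
  (forall w, `|f w| <= M)%R -> f \in Lfun P 1.
Proof. by move=> mf fM; apply: (dom_L1 mf (cst_L1 M)). Qed.

Lemma sq_L1 (f : T -> R) (K : R) : measurable_fun setT f ->
  'E_P[fun w => (f w ^+ 2)%R] <= K%:E -> (fun w => (f w ^+ 2)%R) \in Lfun P 1.
Proof.
move=> mf hK; apply/Lfun1_integrable; apply/integrableP; split.
  by apply/measurable_EFinP; apply: measurable_funX.
apply: (@le_lt_trans _ _ K%:E); last exact: ltey.
move: hK; rewrite unlock; apply: le_trans; rewrite le_eqVlt; apply/orP; left.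
apply/eqP; apply: eq_integral => w _ /=; rewrite ger0_norm //; exact: sqr_ge0.
Qed.

Lemma L1D (f g : T -> R) : f \in Lfun P 1 -> g \in Lfun P 1 ->
  (fun w => f w + g w)%R \in Lfun P 1.
Proof. by move=> fL gL; exact: (rpredD fL gL). Qed.

Lemma L1Z (f : T -> R) k : f \in Lfun P 1 -> (fun w => k * f w)%R \in Lfun P 1.
Proof. by move=> fL; exact: (rpredZ k fL). Qed.

Lemma ErD (f g : T -> R) : f \in Lfun P 1 -> g \in Lfun P 1 ->
  Er (fun w => f w + g w)%R = (Er f + Er g)%R.
Proof.
move=> fL gL; rewrite /Er; have := expectationD fL gL.
by rewrite (E_fin fL) (E_fin gL) => ->.
Qed.

Lemma ErZ (f : T -> R) k : f \in Lfun P 1 -> Er (fun w => k * f w)%R = (k * Er f)%R.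
Proof.
move=> fL; have -> : (fun w => k * f w)%R = k \o* f by apply/funext => w; rewrite /GRing.mulr_fun mulrC.
rewrite /Er.
by rewrite (expectationZl k fL) (E_fin fL) -EFinM /=.
Qed.

Lemma Er_cst (c : R) : Er (cst c) = c.
Proof. by rewrite /Er expectation_cst. Qed.

Lemma Er_cstf (c : R) : Er (fun _ : T => c) = c.
Proof. exact: Er_cst. Qed.

Lemma Er_le (f g : T -> R) : f \in Lfun P 1 -> g \in Lfun P 1 ->
  (forall w, f w <= g w)%R -> (Er f <= Er g)%R.
Proof.
move=> fL gL fg; rewrite -lee_fin -(E_fin fL) -(E_fin gL) unlock.
apply: le_integral => //; try exact/Lfun1_integrable.
by move=> w _; rewrite lee_fin.
Qed.
End expect.
Lemma sq_bound (R : realType) (z x y t : R) : y - t <= z -> z <= x -> z^+2 <= x^+2 + 2 * y^+2 + 2 * t^+2.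
Proof.
move=> h1 h2; have [z0|z0] := lerP 0 z.
  have : z^+2 <= x^+2 by rewrite !expr2; nra.
  have := sqr_ge0 y; have := sqr_ge0 t; lra.
have : z^+2 <= (y - t)^+2 by rewrite !expr2; nra.
have := sqr_ge0 (y + t); rewrite !expr2; nra.
Qed.
Lemma abs_le_sq (R : realType) (x : R) : `|x| <= 1 + x^+2.
Proof.
have [x1|x1] := lerP `|x| 1.
  have := sqr_ge0 x; lra.
rewrite -real_normK ?num_real // expr2.
have : 0 <= (`|x| - 1) * `|x| by apply: mulr_ge0; [lra | exact: normr_ge0].
rewrite mulrBl mul1r; lra.
Qed.
Lemma diff_sq (R : realType) (a b : R) : (a - b)^+2 <= 2 * a^+2 + 2 * b^+2.
Proof. have := sqr_ge0 (a + b); rewrite !expr2; nra. Qed.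
Section probmain.
Context d (T : measurableType d) (R : realType) (P : probability T R).
Variables (Pn G : R -> T -> R) (K : R).
Hypothesis mPn : forall h, measurable_fun setT (Pn h).
Hypothesis mG : forall h, measurable_fun setT (G h).
Hypothesis hP : forall h,
  ('E_P[fun w => ((Pn h w - fine 'E_P[Pn h]) ^+ 2)%R] <= K%:E)%E.
Hypothesis lip : forall a b w, `|Pn a w - Pn b w| <= `|a - b|.
Hypothesis cvx : forall h e w, 0 <= Pn (h + e) w + Pn (h - e) w - 2 * Pn h w.
Hypothesis sand : forall h e w, 0 < e ->
  (Pn h w - Pn (h - e) w) / e <= G h w <= (Pn (h + e) w - Pn h w) / e.
Hypothesis Gb : forall h w, `|G h w| <= 1.

Definition gP h := Er P (Pn h).
Definition AP h := fun w => Pn h w - gP h.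

Lemma mAP h : measurable_fun setT (AP h).
Proof. apply: measurable_funB => //; exact: measurable_cst. Qed.

Lemma AP2_L1 h : (fun w => AP h w ^+ 2) \in Lfun P 1.
Proof. exact: (sq_L1 (mAP h) (hP h)). Qed.

Lemma Er_AP2 h : Er P (fun w => AP h w ^+ 2) <= K.
Proof. by rewrite -lee_fin -(E_fin (AP2_L1 h)); exact: hP. Qed.

Lemma Pn_L1 h : Pn h \in Lfun P 1.
Proof.
have AL : AP h \in Lfun P 1.
  apply: (dom_L1 (mAP h) (L1D (cst_L1 P 1) (AP2_L1 h))) => w.
  exact: abs_le_sq.
have -> : Pn h = (fun w => AP h w + cst (gP h) w).
  by apply/funext => w; rewrite /AP /= subrK.
exact: L1D AL (cst_L1 P _).
Qed.

Ltac l1 := repeat first [ assumption | apply: L1D | apply: L1Z | apply: cst_L1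
  | apply: Pn_L1 | apply: AP2_L1 ].

Lemma gP_comb a b c ka kb kc :
  ka * gP a + (kb * gP b + kc * gP c) =
  Er P (fun w => ka * Pn a w + (kb * Pn b w + kc * Pn c w)).
Proof.
have L := Pn_L1.
rewrite (ErD (f:=fun w => ka * Pn a w) (g:=fun w => kb * Pn b w + kc * Pn c w)); try by l1.
rewrite (ErD (f:=fun w => kb * Pn b w) (g:=fun w => kc * Pn c w)); try by l1.
by rewrite !ErZ //; l1.
Qed.

Lemma gP_lip a b : `|gP a - gP b| <= `|a - b|.
Proof.
have := gP_comb a b a 1 (-1) 0; rewrite !mul1r mul0r addr0 mulN1r => E1.
have L := Pn_L1.
have LL : (fun w => 1 * Pn a w + (-1 * Pn b w + 0 * Pn a w)) \in Lfun P 1.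
  by l1.
rewrite E1 ler_norml; apply/andP; split.
  rewrite -(Er_cst P (- `|a - b|)); apply: Er_le => //; first exact: cst_L1.
  move=> w /=; have := lip a b w; rewrite ler_norml => /andP[h1 h2]; lra.
rewrite -(Er_cst P (`|a - b|)); apply: Er_le => //; first exact: cst_L1.
move=> w /=; have := lip a b w; rewrite ler_norml => /andP[h1 h2]; lra.
Qed.

Lemma gP_cvx h e : 0 <= gP (h + e) + gP (h - e) - 2 * gP h.
Proof.
have := gP_comb (h + e) (h - e) h 1 1 (-2); rewrite !mul1r => E1.
have L := Pn_L1.
have -> : gP (h + e) + gP (h - e) - 2 * gP h =
  gP (h + e) + (gP (h - e) + -2 * gP h) by rewrite mulNr addrA.
rewrite E1 -(Er_cst P 0); apply: Er_le; first exact: cst_L1.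
  by l1.
move=> w /=; have := cvx h e w; lra.
Qed.

Lemma Gm_bound h : `|Er P (G h)| <= 1.
Proof.
have GL : G h \in Lfun P 1 := bdd_L1 P (mG h) (Gb h).
rewrite ler_norml; apply/andP; split.
  rewrite -(Er_cst P (-1)); apply: Er_le => //; first exact: cst_L1.
  by move=> w /=; have := Gb h w; rewrite ler_norml => /andP[].
rewrite -(Er_cst P 1); apply: Er_le => //; first exact: cst_L1.
by move=> w /=; have := Gb h w; rewrite ler_norml => /andP[].
Qed.

Lemma main_var h e : 0 < e ->
  ('E_P[fun w => ((G h w - fine 'E_P[G h]) ^+ 2)%R] <=
   (12 * K / e ^+ 2 + 2 * ((gP (h + e) + gP (h - e) - 2 * gP h) / e) ^+ 2)%:E)%E.
Proof.
move=> e0; have e0' : e != 0 by rewrite gt_eqF.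
set m := fine 'E_P[G h].
set c := (gP (h + e) - gP h) / e.
set ee := (gP (h + e) + gP (h - e) - 2 * gP h) / e.
have GL : G h \in Lfun P 1 := bdd_L1 P (mG h) (Gb h).
have mb : `|m| <= 1 := Gm_bound h.
have VL : (fun w => (G h w - m) ^+ 2) \in Lfun P 1.
  apply: (@bdd_L1 _ _ _ P _ 4).
    apply: measurable_funX; apply: measurable_funB => //; exact: measurable_cst.
  move=> w; rewrite ger0_norm ?sqr_ge0 //; have := Gb h w; rewrite ler_norml.
  move=> /andP[g1 g2]; move: mb; rewrite ler_norml => /andP[m1 m2].
  rewrite expr2; nra.
rewrite (E_fin VL) lee_fin.
have CL : (fun w => (G h w - c) ^+ 2) \in Lfun P 1.
  have -> : (fun w => (G h w - c) ^+ 2) =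
      (fun w => (G h w - m) ^+ 2 + ((2 * (m - c)) * G h w + cst ((m - c) ^+ 2 - 2 * (m - c) * m) w)).
    by apply/funext => w /=; ring.
  by rewrite L1D ?L1D ?L1Z ?cst_L1.
have step1 : Er P (fun w => (G h w - m) ^+ 2) <= Er P (fun w => (G h w - c) ^+ 2).
  have -> : (fun w => (G h w - c) ^+ 2) =
      (fun w => (G h w - m) ^+ 2 + ((2 * (m - c)) * G h w + cst ((m - c) ^+ 2 - 2 * (m - c) * m) w)).
    by apply/funext => w /=; ring.
  rewrite ErD ?L1D ?L1Z ?cst_L1 // ErD ?L1Z ?cst_L1 // ErZ // Er_cst.
  rewrite /Er -/m; have := sqr_ge0 (m - c); rewrite !expr2; nra.
apply: (le_trans step1).
set k := 1 / e ^+ 2.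
have k0 : 0 < k by rewrite divr_gt0 // exprn_gt0.
have AL := AP2_L1.
have BL : (fun w => (2 * k) * AP (h + e) w ^+ 2 + ((6 * k) * AP h w ^+ 2 +
     ((4 * k) * AP (h - e) w ^+ 2 + cst (2 * ee ^+ 2) w))) \in Lfun P 1.
  by rewrite !L1D ?L1Z ?cst_L1.
apply: (le_trans (Er_le CL BL _)).
  move=> w /=.
  have [s1 s2] : (Pn h w - Pn (h - e) w) / e <= G h w /\ G h w <= (Pn (h + e) w - Pn h w) / e.
    by apply/andP; exact: sand.
  set X := (AP (h + e) w - AP h w) / e.
  set Y := (AP h w - AP (h - e) w) / e.
  have hX : G h w - c <= X.
    have : X + c = (Pn (h + e) w - Pn h w) / e by rewrite /X /c /AP; field.
    lra.
  have hY : Y - ee <= G h w - c.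
    have : Y - ee + c = (Pn h w - Pn (h - e) w) / e by rewrite /Y /c /ee /AP; field.
    lra.
  apply: (le_trans (sq_bound hY hX)).
  have hX2 : X ^+ 2 <= 2 * k * AP (h + e) w ^+ 2 + 2 * k * AP h w ^+ 2.
    have -> : X ^+ 2 = k * (AP (h + e) w - AP h w) ^+ 2 by rewrite /X /k; field.
    have := ler_wpM2l (ltW k0) (diff_sq (AP (h + e) w) (AP h w)); nra.
  have hY2 : Y ^+ 2 <= 2 * k * AP h w ^+ 2 + 2 * k * AP (h - e) w ^+ 2.
    have -> : Y ^+ 2 = k * (AP h w - AP (h - e) w) ^+ 2 by rewrite /Y /k; field.
    have := ler_wpM2l (ltW k0) (diff_sq (AP h w) (AP (h - e) w)); nra.
  lra.
rewrite ErD ?L1D ?L1Z ?cst_L1 // ErD ?L1D ?L1Z ?cst_L1 // ErD ?L1Z ?cst_L1 //.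
rewrite Er_cstf !ErZ //.
have := Er_AP2 (h + e); have := Er_AP2 h; have := Er_AP2 (h - e).
have -> : 12 * K / e ^+ 2 = 12 * k * K by rewrite /k; field.
move=> a1 a2 a3.
nra.
Qed.
End probmain.
Lemma le_integral_nm d (T : measurableType d) (R : realType) (mu : {measure set T -> \bar R})
  (D : set T) (f1 f2 : T -> \bar R) :
  (forall x, D x -> (0 <= f1 x)%E) -> (forall x, D x -> (f1 x <= f2 x)%E) ->
  (\int[mu]_(x in D) f1 x <= \int[mu]_(x in D) f2 x)%E.
Proof.
move=> f10 f12.
have f20 : forall x, D x -> (0 <= f2 x)%E by move=> x Dx; exact: le_trans (f10 x Dx) (f12 x Dx).
rewrite (ge0_integralE _ f10) (ge0_integralE _ f20).
apply: le_ereal_sup => _ [h /= hle <-]; exists h => //= x.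
apply: (le_trans (hle x)); rewrite /patch; case: ifP => // /[!inE] Dx.
exact: f12.
Qed.
Lemma lip_cont (R : realType) (g : R -> R) : (forall x y, `|g x - g y| <= `|x - y|) -> continuous g.
Proof.
move=> L x; apply/cvgrPdist_lt => e e0.
near=> y; apply: le_lt_trans (L x y) _.
near: y; apply: (@cvgr_dist_lt _ _ _ (nbhs x) _ (fun y : R => y) x) => //.
Unshelve. all: by end_near. Qed.
Section prim.
Context (R : realType).
Notation mu := (@lebesgue_measure R).
Variables (g : R -> R) (L : R).
Hypothesis Lg : forall x y, `|g x - g y| <= `|x - y|.

Let cg : continuous g := lip_cont Lg.

Definition Phi (x : R) : R := (\int[mu]_(t in [set` `[L, x]]) (g t))%R.

Lemma Phi_deriv x : L < x -> derivable Phi x 1 /\ (Phi^`())%classic x = g x.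
Proof.
move=> Lx; apply: (@continuous_FTC1_closed R g L x (x + 1)) => //.
  by rewrite ltrDl.
apply: continuous_compact_integrable; first exact: segment_compact.
  exact: continuous_subspaceT.
exact: cg.
Qed.

Lemma Phi_is_derive x : L < x -> is_derive x 1 Phi (g x).
Proof.
move=> Lx; have [d1 d2] := Phi_deriv Lx.
by rewrite -d2 derive1E; exact: derivableP.
Qed.

Lemma Phi_cont x : L < x -> {for x, continuous Phi}.
Proof.
move=> Lx; have [d1 _] := Phi_deriv Lx.
exact/differentiable_continuous/derivable1_diffP.
Qed.

Lemma Phi_MVT u e : L < u -> 0 < e ->
  exists2 c, u < c < u + e & Phi (u + e) - Phi u = g c * e.
Proof.
move=> Lu e0.
have ue : u < u + e by rewrite ltrDl.
have h1 : forall x, x \in `]u, u + e[ -> is_derive x 1 Phi (g x).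
  move=> x; rewrite in_itv /= => /andP[ux _]; apply: Phi_is_derive.
  exact: lt_trans Lu ux.
have h2 : {within `[u, u + e], continuous Phi}.
  apply: continuous_in_subspaceT => x; rewrite inE /= in_itv /= => /andP[ux _].
  apply: Phi_cont; exact: lt_le_trans Lu ux.
have [c cin hc] := @MVT R Phi g u (u + e) ue h1 h2.
by exists c; [move: cin; rewrite in_itv | rewrite hc addrAC subrr add0r].
Qed.
End prim.
Lemma lipM_cont (R : realType) (g : R -> R) (M : R) : 0 < M ->
  (forall x y, `|g x - g y| <= M * `|x - y|) -> continuous g.
Proof.
move=> M0 L x; apply/cvgrPdist_lt => e e0.
near=> y; apply: le_lt_trans (L x y) _.
rewrite -ltr_pdivlMl //.
near: y; apply: (@cvgr_dist_lt _ _ _ (nbhs x) _ (fun y : R => y) x) => //.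
by rewrite mulr_gt0 ?invr_gt0.
Unshelve. all: by end_near. Qed.

Section ftcpart.
Context (R : realType).
Notation mu := (@lebesgue_measure R).
Variables (g : R -> R) (L : R).
Hypothesis Lg : forall x y, `|g x - g y| <= `|x - y|.

Lemma shift_derive (c x : R) : L < x + c ->
  is_derive x 1 (fun y => Phi g L (y + c)) (g (x + c)).
Proof.
move=> Lxc.
have h1 : is_derive (shift c x) 1 (Phi g L) (g (x + c)) by exact: Phi_is_derive.
have := @is_derive1_comp R (Phi g L) (shift c) x (g (x + c)) 1 h1 (is_derive_shift x 1 c).
by rewrite mulr1.
Qed.

Lemma int_e_bound a b e K' : L < a - e -> a <= b -> 0 < e ->
  (\int[mu]_(x in `[a, b]) ((K' + 4 * ((g (x + e) + g (x - e) - 2 * g x) / e))%:E) <=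
   (K' * (b - a) + 16 * e)%:E)%E.
Proof.
move=> La ab e0.
have e0' : e != 0 by rewrite gt_eqF.
have [<-|ab'] := eqVneq a b.
  by rewrite set_itv1 integral_set1 subrr mulr0 add0r lee_fin mulr_ge0 // ltW.
have {}ab : a < b by rewrite lt_neqAle ab' ab.
set f := fun x => K' + 4 * ((g (x + e) + g (x - e) - 2 * g x) / e).
set F := fun x => K' * x + 4 / e * (Phi g L (x + e) - 2 * Phi g L x + Phi g L (x - e)).
have dF : forall x, a <= x -> is_derive x 1 F (f x).
  move=> x ax.
  have Lx : L < x - e by apply: (lt_le_trans La); rewrite lerB.
  have Lx' : L < x + e by lra.
  have Lx0 : L < x by lra.
  have d1 := shift_derive Lx'.
  have d2 := shift_derive (c := - e) (x := x) Lx.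
  have d0 : is_derive x 1 (Phi g L) (g x).
    exact: Phi_is_derive.
  have := is_deriveD (is_deriveZ K' (@is_derive_id _ _ x 1))
    (is_deriveZ (4 / e) (is_deriveD (is_deriveB d1 (is_deriveZ 2 d0)) d2)).
  move=> H; apply: is_derive_eq.
  change (K' * 1 + 4 / e * (g (x + e) - 2 * g x + g (x - e)) = f x).
  by rewrite /f; field.
have cf : {within `[a, b], continuous f}.
  apply: continuous_subspaceT; apply: (@lipM_cont _ f (16 / e)); first by rewrite divr_gt0.
  move=> x y.
  have l1 := Lg (x + e) (y + e); have l2 := Lg (x - e) (y - e); have l0 := Lg x y.
  rewrite (_ : x + e - (y + e) = x - y) in l1; last by ring.
  rewrite (_ : x - e - (y - e) = x - y) in l2; last by ring.
  have -> : f x - f y = 4 / e * ((g (x + e) - g (y + e)) + (g (x - e) - g (y - e)) - 2 * (g x - g y)).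
    by rewrite /f; field.
  rewrite normrM (ger0_norm (ltW _)) ?divr_gt0 //.
  have -> : 16 / e * `|x - y| = 4 / e * (4 * `|x - y|) by field.
  apply: ler_wpM2l; first by rewrite ltW // divr_gt0.
  move: l1 l2 l0; rewrite !ler_norml => /andP[? ?] /andP[? ?] /andP[? ?].
  apply/andP; split; lra.
have dLR : derivable_oo_LRcontinuous F a b.
  split.
  - move=> x; rewrite in_itv /= => /andP[ax _].
    by case: (dF x (ltW ax)).
  - case: (dF a (lexx a)) => da _; apply: cvg_at_right_filter.
    exact/differentiable_continuous/derivable1_diffP.
  - case: (dF b (ltW ab)) => db _; apply: cvg_at_left_filter.
    exact/differentiable_continuous/derivable1_diffP.
have F'f : {in `]a, b[, (F^`())%classic =1 f}.
  move=> x; rewrite in_itv /= => /andP[ax _].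
  by case: (dF x (ltW ax)) => _ dv; rewrite derive1E.
rewrite (continuous_FTC2 ab cf dLR F'f) -EFinB lee_fin.
have Lb : L < b - e by lra.
have La' : L < a by lra.
have Lb' : L < b by lra.
have [c1 c1i h1] := Phi_MVT Lg Lb' e0.
have [c2 c2i h2] := Phi_MVT Lg Lb e0.
have [c3 c3i h3] := Phi_MVT Lg La' e0.
have [c4 c4i h4] := Phi_MVT Lg La e0.
rewrite subrK in h2; rewrite subrK in h4.
have Eb : Phi g L (b + e) - 2 * Phi g L b + Phi g L (b - e) = e * (g c1 - g c2) by lra.
have Ea : Phi g L (a + e) - 2 * Phi g L a + Phi g L (a - e) = e * (g c3 - g c4) by lra.
rewrite /F Eb Ea.
have -> : 4 / e * (e * (g c1 - g c2)) = 4 * (g c1 - g c2) by field.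
have -> : 4 / e * (e * (g c3 - g c4)) = 4 * (g c3 - g c4) by field.
move: c1i c2i c3i c4i => /andP[? ?] /andP[? ?] /andP[? ?] /andP[? ?].
have n1 : `|c1 - c2| <= 2 * e by rewrite ler_norml; apply/andP; split; lra.
have n2 : `|c3 - c4| <= 2 * e by rewrite ler_norml; apply/andP; split; lra.
have := Lg c1 c2; rewrite ler_norml => /andP[? ?].
have := Lg c3 c4; rewrite ler_norml => /andP[? ?].
lra.
Qed.
End ftcpart.
Unset Implicit Arguments.
Set Strict Implicit.
Theorem lemma3p2 (R : realType) (d : measure_display) (T : measurableType d)
  (P : probability T R)
  (J : forall n : nat, {set 'I_n} -> T -> R)
  (tau : forall n : nat, R -> 'I_n -> T -> nat)
  (theta h1 alpha hlo hhi C CP : R) :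
  1 / 2 < theta -> theta <= 7 / 8 ->
  0 <= h1 <= 1 -> 0 <= alpha <= 1 ->
  0 < hlo -> hlo <= hhi -> hhi < 1 ->
  0 < CP ->
  (* couplings: nonnegative, finite second moments *)
  (forall n (X : {set 'I_n}) w, 0 <= J n X w) ->
  (forall n (X : {set 'I_n}), J n X \in Lfun P 2%:E) ->
  (* sum_X Var(J_X) <= C n *)
  (forall n, (\sum_(X : {set 'I_n}) variance P (J n X) <= (C * n%:R)%:E)%E) ->
  (* tau_i (for Poisson mean lam) measurable with law Poisson(lam) *)
  (forall n (lam : R) (i : 'I_n), 0 <= lam -> measurable_fun setT (tau n lam i)) ->
  (forall n (lam : R) (i : 'I_n) (U : set nat), 0 <= lam ->
     P (tau n lam i @^-1` U) = poisson_prob lam 0%N U) ->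
  (* all J_X and tau_i mutually independent *)
  (forall n (lam : R), 0 <= lam ->
     mutually_independent P (coupling_family (J n) (tau n lam))) ->
  (* concentration of the pressure, for all parameters *)
  (forall n (h0 h1' alpha' : R), (0 < n)%N -> 0 <= h1' <= 1 -> 0 <= alpha' <= 1 ->
     let Pn := fun w => pressure (fun X => J n X w)
                 (fun i => (tau n (poisson_mean alpha' theta n) i w)%:R) h0 h1' in
     ('E_P[fun w => ((Pn w - fine 'E_P[Pn]) ^+ 2)%R] <= (CP / n%:R)%:E)%E) ->
  exists N : nat, forall n : nat, (N <= n)%N ->
    (\int[lebesgue_measure]_(h0 in `[hlo, hhi])
       (let G := fun w => gibbs_Q1 (fun X => J n X w)
                   (fun i => (tau n (poisson_mean alpha theta n) i w)%:R) h0 h1 in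
        'E_P[fun w => ((G w - fine 'E_P[G]) ^+ 2)%R])
     <= ((5 * CP + 40) / n%:R `^ (1 / 3))%:E)%E.
Proof.
move=> _ _ Hh1 Halpha Hlo Hlohi Hhi HCP _ HJ2 _ Hmeas _ _ Hconc.
exists 1%N => n n0.
set lam := poisson_mean alpha theta n.
have lam0 : 0 <= lam.
  by rewrite /lam /poisson_mean mulr_ge0 ?powR_ge0 //; case/andP: Halpha.
pose tw := fun i w => ((tau n lam i w)%:R : R).
have mJ : forall X, measurable_fun setT (J n X) := fun X => lfun_meas (HJ2 n X).
have mt : forall i, measurable_fun setT (tw i) :=
  fun i => measurableT_comp (@mnat R) (Hmeas n lam i lam0).
pose Pn := fun h w => pressure (fun X => J n X w) (fun i => tw i w) h h1.
pose Gg := fun h w => gibbs_Q1 (fun X => J n X w) (fun i => tw i w) h h1.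
have mPn : forall h, measurable_fun setT (Pn h) := fun h => @meas_P _ _ _ _ _ _ h1 mJ mt h.
have mG : forall h, measurable_fun setT (Gg h) := fun h => @meas_G _ _ _ _ _ _ h1 mJ mt h.
set K := CP / n%:R.
have hP : forall h, ('E_P[fun w => ((Pn h w - fine 'E_P[Pn h]) ^+ 2)%R] <= K%:E)%E.
  by move=> h; exact: (Hconc n h h1 alpha n0 Hh1 Halpha).
have lip : forall a b w, `|Pn a w - Pn b w| <= `|a - b|.
  by move=> a b w; exact: pressure_lip.
have cvx : forall h e w, 0 <= Pn (h + e) w + Pn (h - e) w - 2 * Pn h w.
  by move=> h e w; exact: pressure_convex.
have sand : forall h e w, 0 < e ->
    (Pn h w - Pn (h - e) w) / e <= Gg h w <= (Pn (h + e) w - Pn h w) / e.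
  by move=> h e w e0; exact: gibbs_sandwich.
have Gb : forall h w, `|Gg h w| <= 1.
  by move=> h w; exact: gibbs_Q1_norm.
pose g := gP P Pn.
have Lg : forall x y, `|g x - g y| <= `|x - y| := @gP_lip _ _ _ P Pn K mPn hP lip.
have Cg : forall h e, 0 <= g (h + e) + g (h - e) - 2 * g h := @gP_cvx _ _ _ P Pn K mPn hP cvx.
set t := n%:R `^ (1 / 3) : R.
have nR0 : (0 : R) < n%:R by rewrite ltr0n.
have t0 : 0 < t by rewrite powR_gt0.
have t3 : t ^+ 3 = n%:R.
  rewrite /t -powR_mulrn ?powR_ge0 // -powRrM.
  have -> : (1 / 3 * 3%:R : R) = 1 by field.
  exact: powRr1 (ler0n _ _).
set dl := 2 / t.
have dl0 : 0 < dl by rewrite divr_gt0.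
set K' := 12 * K / dl ^+ 2.
have key : forall h,
  ('E_P[fun w => ((Gg h w - fine 'E_P[Gg h]) ^+ 2)%R] <=
   (K' + 4 * ((g (h + dl) + g (h - dl) - 2 * g h) / dl))%:E)%E.
  move=> h; have mv := @main_var _ _ _ P Pn Gg K mPn mG hP sand Gb h dl dl0.
  apply: (le_trans mv); rewrite lee_fin lerD2l.
  set ee := (g (h + dl) + g (h - dl) - 2 * g h) / dl.
  have e0 : 0 <= ee by rewrite divr_ge0 // ?Cg // ltW.
  have e2 : ee <= 2.
    have l1 : g (h + dl) - g h <= dl.
      have := Lg (h + dl) h.
      have -> : h + dl - h = dl by ring.
      by rewrite (gtr0_norm dl0) ler_norml; case/andP.
    have l2 : g (h - dl) - g h <= dl.
      have := Lg (h - dl) h.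
      have -> : h - dl - h = - dl by ring.
      by rewrite normrN (gtr0_norm dl0) ler_norml; case/andP.
    rewrite /ee ler_pdivrMr //; lra.
  rewrite expr2; nra.
apply: (le_trans (@le_integral_nm _ _ _ lebesgue_measure `[hlo, hhi] _
   (fun h => (K' + 4 * ((g (h + dl) + g (h - dl) - 2 * g h) / dl))%:E) _ _)).
- move=> h _ /=; apply: expectation_ge0 => w; exact: sqr_ge0.
- by move=> h _; exact: key.
have La : hlo - dl - 1 < hlo - dl by lra.
apply: (le_trans (int_e_bound (L := hlo - dl - 1) Lg K' La Hlohi dl0)).
rewrite lee_fin.
have t0' : t != 0 by rewrite gt_eqF.
have -> : K' = 3 * CP / t by rewrite /K' /K /dl -t3; field.
have -> : 3 * CP / t * (hhi - hlo) + 16 * dl = (3 * CP * (hhi - hlo) + 32) / t.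
  by rewrite /dl; field.
rewrite ler_pM2r ?invr_gt0 //.
have : hhi - hlo <= 1 by lra.
have : 0 <= hhi - hlo by lra.
nra.
Qed.
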